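(* Let $\mathcal{A}$ be a prime Banach algebra with a nonzero idempotent $p$ (i.e. $p^2=p\neq0$) such that $\mathcal{A}p$ is finite dimensional. Then every derivation on $\mathcal{A}$ is continuous.
   Context: A derivation on $\mathcal{A}$ is a linear map $\delta:\mathcal{A}\to\mathcal{A}$ with $\delta(ab)=a\delta(b)+\delta(a)b$ for all $a,b\in\mathcal{A}$; it is not assumed continuous. *)

(* Defs.v *)
From HB Require Import structures.
From mathcomp Require Import all_boot all_order all_algebra.
From mathcomp Require Import complex.
From mathcomp Require Import all_classical all_reals all_analysis.
Set Implicit Arguments. Unset Strict Implicit. Unset Printing Implicit Defensive.
Import Order.TTheory GRing.Theory Num.Theory Num.Def ComplexField.
Import numFieldNormedType.Exports.
Local Open Scope ring_scope.

Definition banach_algebra_mul (R : realType) (V : completeNormedModType R[i])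
    (mul : V -> V -> V) : Prop :=
  [/\ (forall a b c : V, mul (mul a b) c = mul a (mul b c)),
      (forall (k : R[i]) (a b c : V), mul (k *: a + b) c = k *: mul a c + mul b c),
      (forall (k : R[i]) (a b c : V), mul a (k *: b + c) = k *: mul a b + mul a c)
    & (forall a b : V, `|mul a b| <= `|a| * `|b|)].

Definition prime_algebra (R : realType) (V : completeNormedModType R[i])
    (mul : V -> V -> V) : Prop :=
  forall a b : V, (forall x : V, mul (mul a x) b = 0) -> a = 0 \/ b = 0.

Definition derivation (R : realType) (V : completeNormedModType R[i])
    (mul : V -> V -> V) (d : V -> V) : Prop :=
  (forall (k : R[i]) (a b : V), d (k *: a + b) = k *: d a + d b) /\
  (forall a b : V, d (mul a b) = mul a (d b) + mul (d a) b).

Definition left_ideal_finite_dim (R : realType) (V : completeNormedModType R[i])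
    (mul : V -> V -> V) (p : V) : Prop :=
  exists s : seq V, forall a : V, exists c : 'I_(size s) -> R[i],
    mul a p = \sum_(i < size s) c i *: s`_i.

(* Main.v *)
Require Import Defs.
From HB Require Import structures.
From mathcomp Require Import all_boot all_order all_algebra.
From mathcomp Require Import complex.
From mathcomp Require Import all_classical all_reals all_analysis.
From mathcomp Require Import ring lra.
Import Order.TTheory GRing.Theory Num.Theory ComplexField.
Import numFieldNormedType.Exports.
Set Implicit Arguments. Unset Strict Implicit.
Local Open Scope ring_scope.

Module Helpers.
Local Open Scope classical_set_scope.
Local Open Scope complex_scope.
Lemma real_lim (R : realType) (x T : nat -> R) :
  (forall k, 0 <= T k) -> (forall k, `|x k.+1 - x k| <= T k - T k.+1) ->
  exists L, forall k, `|L - x k| <= T k.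
Proof.
move=> T0 hx.
pose y k := x k - T k; pose z k := x k + T k.
have yinc : nondecreasing_seq y.
  apply/nondecreasing_seqP => k; have := hx k; rewrite ler_norml /y; lra.
have zdec : nonincreasing_seq z.
  apply/nonincreasing_seqP => k; have := hx k; rewrite ler_norml /z; lra.
have yz : forall m k, y m <= z k.
  move=> m k; case: (leqP m k) => mk.
    apply: (le_trans (yinc _ _ mk)); have := T0 k; rewrite /y /z; lra.
  apply: (le_trans _ (zdec _ _ (ltnW mk))); have := T0 m; rewrite /y /z; lra.
have hs : has_sup (range y).
  split; first by exists (y 0%N), 0%N.
  by exists (z 0%N) => _ [m _ <-]; exact: yz.
exists (sup (range y)) => k.
have h1 : y k <= sup (range y) by apply: sup_upper_bound => //; exists k.
have h2 : sup (range y) <= z k.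
  by apply: ge_sup; [exists (y 0%N), 0%N | move=> _ [m _ <-]; exact: yz].
rewrite ler_norml; move: h1 h2; rewrite /y /z; lra.
Qed.

Section NR.
Variable R : realType.
Local Notation K := R[i].

Definition nr {V : normedModType K} (v : V) : R := complex.Re `|v|.
Definition nc (z : K) : R := complex.Re `|z|.

Lemma ncE (z : K) : `|z| = (nc z)%:C.
Proof.
have h : 0 <= `|z| by [].
rewrite /nc; move: h; case: (`|z|) => a b; rewrite lecE /= => /andP[/eqP-> _].
by [].
Qed.

Lemma nc_ge0 (z : K) : 0 <= nc z.
Proof. by rewrite -ler0c -ncE. Qed.

Lemma nrE {V : normedModType K} (v : V) : `|v| = (nr v)%:C.
Proof.
have h : 0 <= `|v| by [].
rewrite /nr; move: h; case: (`|v|) => a b; rewrite lecE /= => /andP[/eqP-> _].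
by [].
Qed.

Lemma nr_ge0 {V : normedModType K} (v : V) : 0 <= nr v.
Proof. by rewrite -ler0c -nrE. Qed.

Lemma nrD {V : normedModType K} (u v : V) : nr (u + v) <= nr u + nr v.
Proof. by rewrite -lecR rmorphD /= -!nrE ler_normD. Qed.

Lemma nrZ {V : normedModType K} (k : K) (v : V) : nr (k *: v) = nc k * nr v.
Proof. by apply: complexI; rewrite rmorphM /= -ncE -!nrE normrZ. Qed.

Lemma nrN {V : normedModType K} (v : V) : nr (- v) = nr v.
Proof. by rewrite /nr normrN. Qed.

Lemma nr0 {V : normedModType K} : nr (0 : V) = 0.
Proof. by rewrite /nr normr0. Qed.

Lemma nr_eq0 {V : normedModType K} (v : V) : nr v = 0 -> v = 0.
Proof. by move=> h; apply/normr0_eq0; rewrite nrE h. Qed.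

Lemma nrB {V : normedModType K} (u v : V) : nr (u - v) = nr (v - u).
Proof. by rewrite /nr distrC. Qed.

Lemma nr_Re (z : K) : `|complex.Re z| <= nc z.
Proof.
case: z => a b; rewrite /nc normc_def /=.
by rewrite -[`|a|]sqrtr_sqr ler_sqrt ?addr_ge0 ?sqr_ge0 // lerDl sqr_ge0.
Qed.

Lemma nr_Im (z : K) : `|complex.Im z| <= nc z.
Proof.
case: z => a b; rewrite /nc normc_def /=.
by rewrite -[`|b|]sqrtr_sqr ler_sqrt ?addr_ge0 ?sqr_ge0 // lerDr sqr_ge0.
Qed.

Lemma nr_ReIm (z : K) : nc z <= `|complex.Re z| + `|complex.Im z|.
Proof.
case: z => a b; rewrite /nc normc_def /=.
have -> : `|a| + `|b| = Num.sqrt ((`|a| + `|b|)^+2).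
  by rewrite sqrtr_sqr (ger0_norm (addr_ge0 (normr_ge0 a) (normr_ge0 b))).
rewrite ler_sqrt ?sqr_ge0 // sqrrD !real_normK ?num_real //.
rewrite -addrA lerD2l lerDr; apply: mulrn_wge0; exact: mulr_ge0.
Qed.

Lemma nr_sum {V : normedModType K} n (F : 'I_n -> V) :
  nr (\sum_(i < n) F i) <= \sum_(i < n) nr (F i).
Proof.
elim: n F => [|n IH] F; first by rewrite !big_ord0 nr0.
rewrite !big_ord_recr /=; apply: (le_trans (nrD _ _)); rewrite lerD2r; exact: IH.
Qed.

End NR.
Section Alg.
Variable K : fieldType.

Definition lcn {V : lmodType K} (s : seq V) (c : nat -> K) : V :=
  \sum_(i < size s) c i *: s`_i.

Definition spn {V : lmodType K} (s : seq V) (v : V) : Prop :=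
  exists c : nat -> K, v = lcn s c.

Definition subsp {V : lmodType K} (Q : V -> Prop) : Prop :=
  Q 0 /\ forall k u v, Q u -> Q v -> Q (k *: u + v).

Definition fs {V : lmodType K} (Q : V -> Prop) : Prop :=
  exists e : seq V, (forall i, (i < size e)%N -> Q e`_i) /\ forall v, Q v -> spn e v.

Lemma lcn_nil {V : lmodType K} (c : nat -> K) : lcn ([::] : seq V) c = 0.
Proof. by rewrite /lcn big_ord0. Qed.

Lemma lcn_cons {V : lmodType K} (t : V) s c :
  lcn (t :: s) c = c 0%N *: t + lcn s (fun i => c i.+1).
Proof. by rewrite /lcn big_ord_recl /=. Qed.

Lemma lcn_lin {V : lmodType K} (s : seq V) a c1 c2 :
  lcn s (fun i => a * c1 i + c2 i) = a *: lcn s c1 + lcn s c2.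
Proof.
rewrite /lcn scaler_sumr -big_split /=; apply: eq_bigr => i _.
by rewrite scalerDl scalerA.
Qed.

Lemma lcn0 {V : lmodType K} (s : seq V) : lcn s (fun _ => 0) = 0.
Proof. by rewrite /lcn big1 // => i _; rewrite scale0r. Qed.

Lemma spn_lin {V : lmodType K} (s : seq V) k u v :
  spn s u -> spn s v -> spn s (k *: u + v).
Proof. by move=> [c1 ->] [c2 ->]; exists (fun i => k * c1 i + c2 i); rewrite lcn_lin. Qed.

Lemma spn0 {V : lmodType K} (s : seq V) : spn s 0.
Proof. by exists (fun _ => 0); rewrite lcn0. Qed.

Lemma fs_ext {V : lmodType K} {P Q : V -> Prop} :
  (forall v, P v <-> Q v) -> fs P -> fs Q.
Proof.
move=> h [e [he1 he2]]; exists e; split => [i /he1 /h //|v /h]; exact: he2.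
Qed.

Lemma fin_span_rel {V W : lmodType K} (Psi : V -> W)
  (lin : forall k u v, Psi (k *: u + v) = k *: Psi u + Psi v) :
  forall (s : seq W) (P : V -> Prop), subsp P ->
  (forall v, P v -> spn s (Psi v)) ->
  fs (fun v => P v /\ Psi v = 0) -> fs P.
Proof.
have Psi0 : Psi 0 = 0.
  by have := lin (-1) 0 0; rewrite scaler0 addr0 scaleN1r addNr.
elim=> [|t s IH] P sP hP hk.
  apply: (fs_ext _ hk) => v; split => [[] //|Pv]; split => //.
  by have [c ->] := hP v Pv; rewrite lcn_nil.
pose P' v := P v /\ spn s (Psi v).
have sP' : subsp P'.
  split; first by split; [exact: sP.1 | rewrite Psi0; exact: spn0].
  move=> k u v [Pu su] [Pv sv]; split; first exact: sP.2.
  by rewrite lin; exact: spn_lin.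
have fP' : fs P'.
  apply: IH => //; first by move=> v [].
  eapply fs_ext; last exact: hk.
  move=> v /=; split => [[Pv Pv0]|[[Pv _] ->]] //.
  by split => //; split => //; rewrite Pv0; exact: spn0.
have [hall|] := EM (forall v, P v -> spn s (Psi v)).
  case: fP' => e [he1 he2]; exists e; split => [i /he1 []//|v Pv].
  by apply: he2; split => //; exact: hall.
move=> /existsNP [v0 /not_implyP [Pv0 nv0]].
case: fP' => e [he1 he2].
have [c0 hc0] := hP v0 Pv0.
rewrite lcn_cons in hc0.
have l0 : c0 0%N != 0.
  apply/eqP => h0; apply: nv0; exists (fun i => c0 i.+1).
  by rewrite hc0 h0 scale0r add0r.
exists (v0 :: e); split.
  by case=> [|i] //= /he1 [].
move=> v Pv; have [c hc] := hP v Pv; rewrite lcn_cons in hc.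
pose mu := c 0%N / c0 0%N.
have Pw : P' ((- mu) *: v0 + v).
  split; first exact: sP.2.
  exists (fun i => - mu * c0 i.+1 + c i.+1).
  rewrite lin hc0 hc lcn_lin scalerDr scalerA addrACA -scalerDl.
  have -> : - mu * c0 0%N + c 0%N = 0 by rewrite /mu mulNr divfK // addNr.
  by rewrite scale0r add0r.
have [cw hw] := he2 _ Pw.
exists (fun i => if i is j.+1 then cw j else mu).
rewrite lcn_cons /= -hw scaleNr addrA addrN add0r //.
Qed.

Lemma fs_chain {V : lmodType K} (mul : V -> V -> V)
  (linl : forall k a b c, mul (k *: a + b) c = k *: mul a c + mul b c)
  (s : seq V) :
  forall (l : seq V) (Q : V -> Prop), subsp Q ->
  (forall b, Q b -> forall i, (i < size l)%N -> spn s (mul b l`_i)) ->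
  fs (fun b => Q b /\ forall i, (i < size l)%N -> mul b l`_i = 0) -> fs Q.
Proof.
have mul0 : forall x, mul 0 x = 0.
  by move=> x; have := linl (-1) 0 0 x; rewrite scaler0 addr0 scaleN1r addNr.
elim=> [|x l IH] Q sQ hQ hk.
  by eapply fs_ext; last exact: hk; move=> v /=; split => [[]//|]; split.
pose Q' b := Q b /\ mul b x = 0.
have sQ' : subsp Q'.
  split; first by split; [exact: sQ.1|exact: mul0].
  move=> k u v [Qu ux] [Qv vx]; split; first exact: sQ.2.
  by rewrite linl ux vx scaler0 addr0.
have fQ' : fs Q'.
  apply: IH => //.
    by move=> b [Qb _] i hi; exact: (hQ b Qb i.+1).
  eapply fs_ext; last exact: hk.
  move=> b /=; split => [[Qb hb]|[[Qb bx] hb]].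
    by split; [split => //; exact: (hb 0%N)| move=> i hi; exact: (hb i.+1)].
  by split => // -[|i] //= hi; exact: hb.
apply: (@fin_span_rel V V (fun b => mul b x)) sQ _ _.
- by move=> k u v; exact: linl.
- by move=> b Qb; exact: (hQ b Qb 0%N).
- exact: fQ'.
Qed.
End Alg.

Section Key.
Variable R : realType.
Local Notation K := R[i].
Variable V : normedModType K.

Lemma nc0 : nc (0 : K) = 0.
Proof. by rewrite /nc normr0. Qed.

Lemma ncN (z : K) : nc (- z) = nc z.
Proof. by rewrite /nc normrN. Qed.

Lemma ReB (z w : K) : complex.Re (z - w) = complex.Re z - complex.Re w.
Proof. by case: z => a b; case: w. Qed.

Lemma ImB (z w : K) : complex.Im (z - w) = complex.Im z - complex.Im w.
Proof. by case: z => a b; case: w. Qed.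

Lemma lcn_ext (s : seq V) c1 c2 : (forall i, c1 i = c2 i) -> lcn s c1 = lcn s c2.
Proof. by move=> h; rewrite /lcn; apply: eq_bigr => i _; rewrite h. Qed.

Lemma lcnZ (s : seq V) a c : lcn s (fun i => a * c i) = a *: lcn s c.
Proof.
rewrite -[RHS]addr0 -(lcn0 s) -lcn_lin; apply: lcn_ext => i; by rewrite addr0.
Qed.

Lemma lcnD (s : seq V) c1 c2 : lcn s (fun i => c1 i + c2 i) = lcn s c1 + lcn s c2.
Proof. by rewrite -[lcn s c1]scale1r -lcn_lin; apply: lcn_ext => i; rewrite mul1r. Qed.

Lemma lcnB (s : seq V) c1 c2 : lcn s (fun i => c1 i - c2 i) = lcn s c1 - lcn s c2.
Proof.
rewrite addrC -scaleN1r -lcn_lin; apply: lcn_ext => i.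
by rewrite mulN1r addrC.
Qed.

Lemma nr_lcn (s : seq V) c :
  nr (lcn s c) <= \sum_(i < size s) nc (c i) * nr s`_i.
Proof.
apply: (le_trans (nr_sum _)); apply: ler_sum => i _; by rewrite nrZ.
Qed.

Lemma two_exp_ge (k : nat) : (k%:R : R) <= 2 ^+ k.
Proof.
elim: k => [|k IH]; first by rewrite expr0 ler01.
have h1 : 1 <= (2 : R) ^+ k by apply: exprn_ege1; rewrite ler1n.
rewrite exprS -natr1; lra.
Qed.

Lemma small_zero (x B : R) : 0 <= x ->
  (forall k, x <= ((2 : R) ^+ k)^-1 * B) -> x = 0.
Proof.
move=> x0 h; apply/eqP; rewrite eq_le x0 andbT leNgt; apply/negP => xp.
have hk : forall k : nat, x * k%:R <= B.
  move=> k; have := h k; rewrite mulrC ler_pdivlMr ?exprn_gt0 // => hk.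
  by apply: (le_trans _ hk); rewrite ler_pM2l // two_exp_ge.
have B0 : 0 <= B by apply: (le_trans _ (hk 0%N)); rewrite mulr0.
have := archi_boundP (divr_ge0 B0 (ltW xp)).
set n := Num.bound _ => hn.
have := hk n; rewrite ltr_pdivrMr // in hn; rewrite mulrC; lra.
Qed.

Lemma closure (s : seq V) (t : V) (M : R) : 0 <= M ->
  (forall c, exists c', lcn s c' = lcn s c /\
     forall i, nc (c' i) <= M * nr (lcn s c)) ->
  (forall d : R, 0 < d -> exists c, nr (t + lcn s c) < d) ->
  exists c0, t + lcn s c0 = 0.
Proof.
move=> M0 hM hB.
pose e k : R := ((2:R) ^+ k)^-1.
have e0 : forall k, 0 < e k by move=> k; rewrite /e invr_gt0 exprn_gt0.
have eS : forall k, e k.+1 = e k / 2 by move=> k; rewrite /e exprS invfM mulrC.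
have [a ha] := choice (fun k => hB (e k) (e0 k)).
have hd : forall k, exists d, lcn s d = lcn s (fun i => a k.+1 i - a k i) /\
    forall i, nc (d i) <= M * (2 * e k).
  move=> k; have [d [hd1 hd2]] := hM (fun i => a k.+1 i - a k i).
  exists d; split => // i; apply: (le_trans (hd2 i)); apply: ler_wpM2l => //.
  rewrite lcnB.
  have -> : lcn s (a k.+1) - lcn s (a k) =
     (t + lcn s (a k.+1)) - (t + lcn s (a k)) by rewrite opprD addrACA subrr add0r.
  apply: (le_trans (nrD _ _)); rewrite nrN.
  have := ha k; have := ha k.+1; rewrite eS; have := e0 k; lra.
have [d hdd] := choice hd.
pose C k i := a 0%N i + \sum_(j < k) d j i.
have hC : forall k, lcn s (C k) = lcn s (a k).
  elim=> [|k IH].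
    by apply: lcn_ext => i; rewrite /C big_ord0 addr0.
  have -> : lcn s (C k.+1) = lcn s (fun i => C k i + d k i).
    by apply: lcn_ext => i; rewrite /C big_ord_recr /= addrA.
  by rewrite lcnD IH (hdd k).1 lcnB addrC subrK.
pose T k : R := 4 * M * e k.
have T0 : forall k, 0 <= T k by move=> k; have := e0 k; rewrite /T; nra.
have TS : forall k, T k - T k.+1 = M * (2 * e k).
  by move=> k; rewrite /T eS; field.
have Cd : forall k i, C k.+1 i - C k i = d k i.
  by move=> k i; rewrite /C big_ord_recr /=; ring.
have hre : forall i, exists L, forall k, `|L - complex.Re (C k i)| <= T k.
  move=> i; apply: real_lim => // k; rewrite -ReB Cd TS.
  exact: le_trans (nr_Re _) ((hdd k).2 i).
have him : forall i, exists L, forall k, `|L - complex.Im (C k i)| <= T k.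
  move=> i; apply: real_lim => // k; rewrite -ImB Cd TS.
  exact: le_trans (nr_Im _) ((hdd k).2 i).
have [Lr hLr] := choice hre.
have [Li hLi] := choice him.
pose Ci i : K := Complex (Lr i) (Li i).
have hCi : forall k i, nc (Ci i - C k i) <= 2 * T k.
  move=> k i; apply: (le_trans (nr_ReIm _)); rewrite ReB ImB /=.
  have := hLr i k; have := hLi i k; lra.
pose S := \sum_(i < size s) nr s`_i.
exists Ci; apply: nr_eq0; apply: (@small_zero _ (1 + 8 * M * S)); first exact: nr_ge0.
move=> k; rewrite -/(e k).
have -> : t + lcn s Ci = (t + lcn s (C k)) + lcn s (fun i => Ci i - C k i).
  by rewrite lcnB [X in _ = _ + X]addrC addrA addrK.
rewrite hC; apply: (le_trans (nrD _ _)).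
have h1 := ha k.
have h2 : nr (lcn s (fun i => Ci i - C k i)) <= 2 * T k * S.
  apply: (le_trans (nr_lcn _ _)); rewrite /S mulr_sumr; apply: ler_sum => i _.
  by apply: ler_wpM2r; [exact: nr_ge0 | exact: hCi].
move: h2; rewrite /T; lra.
Qed.

Lemma key (s : seq V) : exists M : R, 0 <= M /\ forall c, exists c',
  lcn s c' = lcn s c /\ forall i, nc (c' i) <= M * nr (lcn s c).
Proof.
elim: s => [|t s [M' [M'0 hM']]].
  exists 0; split => // c; exists (fun _ => 0); split; first by rewrite !lcn_nil.
  by move=> i; rewrite nc0 mul0r.
have [[dl [dl0 hdl]]|nA] := EM (exists dl : R, 0 < dl /\
    forall c, dl <= nr (t + lcn s c)).
  exists (dl^-1 + M' * (1 + nr t / dl)); split.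
    apply: addr_ge0; first by rewrite invr_ge0 ltW.
    apply: mulr_ge0 => //; apply: addr_ge0 => //; apply: divr_ge0 (nr_ge0 _) (ltW dl0).
  move=> c; rewrite lcn_cons; set lam := c 0%N; set u := lcn s _.
  set v := lam *: t + u.
  have hlam : nc lam * dl <= nr v.
    have [->|l0] := eqVneq lam 0; first by rewrite nc0 mul0r; exact: nr_ge0.
    have -> : v = lam *: (t + lcn s (fun i => lam^-1 * c i.+1)).
      by rewrite lcnZ scalerDr scalerA mulfV // scale1r.
    by rewrite nrZ; apply: ler_wpM2l; [exact: nc_ge0 | exact: hdl].
  have hu : nr u <= nr v + nc lam * nr t.
    have -> : u = v + - (lam *: t) by rewrite /v addrC addKr.
    by apply: (le_trans (nrD _ _)); rewrite nrN nrZ.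
  have [c'' [hc1 hc2]] := hM' (fun i => c i.+1).
  exists (fun i => if i is j.+1 then c'' j else lam); split.
    by rewrite lcn_cons /= hc1.
  have hl : nc lam <= dl^-1 * nr v by rewrite mulrC ler_pdivlMr.
  have nv0 := nr_ge0 v; have nt0 := nr_ge0 t; have nl0 := nc_ge0 lam.
  case=> [|j] /=.
    have : 0 <= M' * (1 + nr t / dl) * nr v.
      apply: mulr_ge0 => //; apply: mulr_ge0 => //; apply: addr_ge0 => //.
      exact: divr_ge0 nt0 (ltW dl0).
    move: hl; rewrite mulrDl; lra.
  have h3 := hc2 j; rewrite -/u in h3.
  have h4 : M' * nr u <= M' * (nr v + dl^-1 * nr v * nr t).
    apply: ler_wpM2l => //; apply: (le_trans hu); rewrite lerD2l.
    by apply: ler_wpM2r.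
  have h5 : 0 <= dl^-1 * nr v by apply: mulr_ge0 => //; rewrite invr_ge0 ltW.
  apply: (le_trans h3); apply: (le_trans h4).
  have -> : M' * (nr v + dl^-1 * nr v * nr t) = M' * (1 + nr t / dl) * nr v.
    by rewrite /=; field; rewrite gt_eqF.
  by rewrite mulrDl lerDr.
have hB : forall d : R, 0 < d -> exists c, nr (t + lcn s c) < d.
  move=> d d0; apply: contrapT => hn; apply: nA; exists d; split => // c.
  by rewrite leNgt; apply/negP => h; apply: hn; exists c.
have [c0 hc0] := closure M'0 hM' hB.
exists M'; split => // c.
pose cc i := c i.+1 - c 0%N * c0 i.
have hv : lcn (t :: s) c = lcn s cc.
  rewrite lcn_cons /cc lcnB lcnZ addrC; congr (_ + _).
  by move/eqP: hc0; rewrite addr_eq0 => /eqP ->; rewrite scalerN.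
have [c'' [hc1 hc2]] := hM' cc.
exists (fun i => if i is j.+1 then c'' j else 0); split.
  by rewrite lcn_cons /= scale0r add0r hc1 hv.
case=> [|j] /=; first by rewrite nc0; apply: mulr_ge0 => //; exact: nr_ge0.
by rewrite hv; exact: hc2.
Qed.
End Key.

Lemma lin_sum {K : fieldType} {V : lmodType K} (f : V -> V)
  (lin : forall k u v, f (k *: u + v) = k *: f u + f v) n (c : 'I_n -> K) (x : 'I_n -> V) :
  f (\sum_(i < n) c i *: x i) = \sum_(i < n) c i *: f (x i).
Proof.
have f0 : f 0 = 0 by have := lin (-1) 0 0; rewrite scaler0 addr0 scaleN1r addNr.
elim: n c x => [|n IH] c x; first by rewrite !big_ord0.
by rewrite !big_ord_recr /= addrC lin IH addrC.
Qed.

Lemma ord_to_nat {K : fieldType} {V : lmodType K} (s : seq V) (c : 'I_(size s) -> K) :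
  spn s (\sum_(i < size s) c i *: s`_i).
Proof.
exists (fun n => if insub n is Some i then c i else 0).
by rewrite /lcn; apply: eq_bigr => i _; rewrite valK.
Qed.

End Helpers.
Import Helpers.
Local Open Scope complex_scope.

Theorem proposition2p9 (R : realType) (V : completeNormedModType R[i])
    (mul : V -> V -> V) (p : V) :
  banach_algebra_mul mul -> prime_algebra mul ->
  mul p p = p -> p != 0 -> left_ideal_finite_dim mul p ->
  forall d : V -> V, derivation mul d -> continuous d.
Proof.
move=> [assoc linl linr _] hprime hpp hp0 [s hs] d [dlin dleib].
have mul0 : forall x, mul 0 x = 0.
  by move=> x; have := linl (-1) 0 0 x; rewrite scaler0 addr0 scaleN1r addNr.
have hsp : forall a, spn s (mul a p).
  by move=> a; have [c ->] := hs a; exact: ord_to_nat.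
pose X := fun x : V => exists a, x = mul a p.
have sX : subsp X.
  split; first by exists 0; rewrite mul0.
  by move=> k u v [a ->] [b ->]; exists (k *: a + b); rewrite linl.
have fX : fs X.
  apply: (@fin_span_rel _ V V (fun v => v) _ s X sX).
  - by move=> k u v.
  - by move=> v [a ->]; exact: hsp.
  - by exists [::]; split => [i //|v [_ ->]]; exact: spn0.
have [e1 [he1 he2]] := fX.
have fT : fs (fun _ : V => True).
  apply: (@fs_chain _ V mul linl s e1) => //.
  - by move=> b _ i hi; have [a ->] := he1 i hi; rewrite -assoc; exact: hsp.
  - exists [::]; split => [i //|v [_ hv]].
    suff -> : v = 0 by exact: spn0.
    have hv0 : forall x, mul (mul v x) p = 0.
      move=> x; rewrite assoc; have [c ->] := he2 (mul x p) (ex_intro _ x erefl).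
      rewrite /lcn lin_sum; last by move=> k u w; exact: linr.
      by rewrite big1 // => i _; rewrite hv // scaler0.
    by case: (hprime v p hv0) => // hp; move/eqP: hp0.
have [e2 [_ he2']] := fT.
have [M [M0 hM]] := key e2.
pose D := \sum_(i < size e2) nr (d e2`_i).
have D0 : 0 <= D by apply: sumr_ge0 => i _; exact: nr_ge0.
have hbound : forall v, nr (d v) <= M * D * nr v.
  move=> v; have [c hc] := he2' v I; have [c' [hc1 hc2]] := hM c.
  rewrite hc -{1}hc1 /lcn lin_sum; last by move=> k u w; exact: dlin.
  apply: (le_trans (nr_sum _)).
  have -> : M * D * nr (\sum_(i < size e2) c i *: e2`_i) =
     \sum_(i < size e2) (M * nr (lcn e2 c)) * nr (d e2`_i).
    by rewrite -mulr_sumr /D /lcn; ring.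
  apply: ler_sum => i _; rewrite nrZ; apply: ler_wpM2r; first exact: nr_ge0.
  exact: hc2.
set B := M * D.
have B0 : 0 <= B by apply: mulr_ge0.
have dB : forall x y, d x - d y = d (x - y).
  move=> x y; have h := dlin (-1) y x; rewrite !scaleN1r in h.
  by rewrite addrC -h addrC.
move=> x; apply/cvgrPdist_lt => eps eps0.
have Bp : 0 < (B + 1)%:C.
  by rewrite -[0]/((0 : R)%:C) ltcR; lra.
have ep : 0 < eps / (B + 1)%:C by rewrite divr_gt0.
near=> y.
have hy : `|x - y| < eps / (B + 1)%:C.
  near: y.
  have := @cvgr_dist_lt _ _ _ (nbhs x) _ id x (@cvg_id _ (nbhs x)) _ ep.
  exact.
rewrite ltr_pdivlMr // in hy.
rewrite dB; apply: (le_lt_trans _ hy).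
rewrite nrE (nrE (x - y)) -rmorphM lecR mulrC.
apply: (le_trans (hbound _)); apply: ler_wpM2r; first exact: nr_ge0.
rewrite -/B; lra.
Unshelve. all: by end_near.
Qed.
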